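(* There is a constant $c>0$ such that for every $\rho \geqslant 1$ and every $n$, $\operatorname{xc}(\mathrm{CUT}(n), \rho\,\mathrm{CUT}(n)) \geqslant 2^{cn}$. Consequently, for every $\rho\geqslant 1$, every $\rho$-approximate EF of the Max CUT problem with arbitrary weights (whose associated pair is $P = Q = \mathrm{CUT}(n)$) has size $2^{\Omega(n)}$.
   Context: Let $K_n = (V_n,E_n)$ be the complete graph on $n$ vertices. For $X \subseteq V_n$, $\delta(X)$ is the set of edges with exactly one endpoint in $X$, and $\chi^{\delta(X)} \in \mathbb{R}^{E_n}$ its characteristic vector. The cut polytope is $\mathrm{CUT}(n) = \mathrm{conv}\{\chi^{\delta(X)} \mid X \subseteq V_n\}$. For polyhedra $P\subseteq Q \subseteq \mathbb{R}^d$, an extended formulation of the pair $P,Q$ is a system $Ex+Fy = g$, $y \geqslant \mathbf 0$, $y\in\mathbb{R}^r$, such that $K = \{x \mid \exists y: Ex + Fy = g, y \geqslant \mathbf 0\}$ satisfies $P \subseteq K \subseteq Q$; its size is $r$, and $\operatorname{xc}(P,Q)$ is the minimum size of such an EF. A $\rho$-approximate EF for Max CUT with arbitrary weights is an EF of the pair $\mathrm{CUT}(n), \rho\,\mathrm{CUT}(n)$. *)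

(* Defs.v *)
From HB Require Import structures.
From mathcomp Require Import all_boot all_order all_algebra.
From mathcomp Require Import reals exp.
Set Implicit Arguments. Unset Strict Implicit. Unset Printing Implicit Defensive.
Import Order.TTheory GRing.Theory Num.Theory.
Local Open Scope ring_scope.

(* Edge set E_n of the complete graph K_n on vertex set V_n = 'I_n:
   unordered pairs {i,j}, represented as ordered pairs (i,j) with i < j. *)
Definition edge (n : nat) := {e : 'I_n * 'I_n | (e.1 < e.2)%N}.

Definition vecE (R : realType) (n : nat) := edge n -> R.

Definition cut_vec (R : realType) (n : nat) (X : {set 'I_n}) : vecE R n :=
  fun e => if ((val e).1 \in X) != ((val e).2 \in X) then 1 else 0.

Definition CUT (R : realType) (n : nat) : vecE R n -> Prop :=
  fun x => exists lam : {set 'I_n} -> R,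
    [/\ forall X, 0 <= lam X,
        \sum_(X : {set 'I_n}) lam X = 1 &
        forall e, x e = \sum_(X : {set 'I_n}) lam X * cut_vec R X e].

Definition scale_set (R : realType) (n : nat) (rho : R) (S : vecE R n -> Prop)
  : vecE R n -> Prop :=
  fun x => exists2 z, S z & forall e, x e = rho * z e.

Definition EF_proj (R : realType) (n m r : nat)
  (E : 'I_m -> edge n -> R) (F : 'I_m -> 'I_r -> R) (g : 'I_m -> R)
  : vecE R n -> Prop :=
  fun x => exists y : 'I_r -> R,
    (forall j, 0 <= y j) /\
    forall i, \sum_(e : edge n) E i e * x e + \sum_(j < r) F i j * y j = g i.

Definition has_EF (R : realType) (n : nat) (P Q : vecE R n -> Prop) (r : nat) : Prop :=
  exists (m : nat) (E : 'I_m -> edge n -> R) (F : 'I_m -> 'I_r -> R) (g : 'I_m -> R),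
    (forall x, P x -> EF_proj E F g x) /\ (forall x, EF_proj E F g x -> Q x).

(* xc(P,Q) >= b : every extended formulation of the pair P, Q has size >= b
   (xc is the minimum of the sizes, +oo if there is none). *)
Definition xc_ge (R : realType) (n : nat) (P Q : vecE R n -> Prop) (b : R) : Prop :=
  forall r, has_EF P Q r -> b <= r%:R.

(* Main.v *)
Require Import Defs.
From HB Require Import structures.
From mathcomp Require Import all_boot all_order all_algebra.
From mathcomp Require Import reals exp boolp.
From mathcomp Require Import ring lra zify.
Import Order.TTheory GRing.Theory Num.Theory.
Set Implicit Arguments. Unset Strict Implicit.
Fixpoint subs (m : nat) : seq (seq bool) :=
  if m is m'.+1 then [seq false :: a | a <- subs m'] ++ [seq true :: a | a <- subs m']
  else [:: [::]].

Definition ip (m : nat) (a b : seq bool) : nat :=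
  \sum_(i < m) (nth false a i && nth false b i).

Lemma ipS m x y a b : ip m.+1 (x :: a) (y :: b) = (x && y) + ip m a b.
Proof. by rewrite /ip big_ord_recl. Qed.

Definition DD m (A B : seq bool -> bool) : nat :=
  \sum_(a <- subs m) \sum_(b <- subs m) (A a && B b && (ip m a b == 0)).

Lemma sum_subsS m (F : seq bool -> nat) :
  \sum_(a <- subs m.+1) F a = \sum_(a <- subs m) F (false :: a) + \sum_(a <- subs m) F (true :: a).
Proof. by rewrite /= big_cat !big_map. Qed.

Lemma KW m : forall A B : seq bool -> bool,
  (forall a b, A a -> B b -> ip m a b != 1) -> DD m A B <= 2 ^ m.
Proof.
elim: m => [|m IH] A B H.
  rewrite /DD /= !big_seq1; by case: (A _ && _ && _).
pose A0 a := A (false :: a). pose A1 a := A (true :: a).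
pose B0 b := B (false :: b). pose B1 b := B (true :: b).
have H1 : forall a b, A1 a -> B1 b -> ip m a b != 0.
  move=> a b ha hb; have := H _ _ ha hb; rewrite ipS /=.
  by apply: contra => /eqP ->.
have IH1 := IH A0 (fun b => B0 b || B1 b).
have IH2 := IH (fun a => A0 a || A1 a) B0.
have L : DD m.+1 A B <= DD m A0 (fun b => B0 b || B1 b) + DD m (fun a => A0 a || A1 a) B0.
  rewrite /DD sum_subsS -!big_split /=.
  apply: leq_sum => a _.
  rewrite !sum_subsS -!big_split /=; apply: leq_sum => b _.
  rewrite !ipS /= !add0n add1n /=.
  have := H1 a b; rewrite /A0 /A1 /B0 /B1.
  case: (A (false :: a)); case: (A (true :: a)); case: (B (false :: b)); case: (B (true :: b));
  case: (ip m a b == 0) => //= h; by move: (h isT isT).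
rewrite expnS mul2n -addnn; apply: (leq_trans L); apply: leq_add.
  apply: IH1 => a b ha /orP [] hb.
    by have := H _ _ ha hb; rewrite ipS.
  by have := H _ _ ha hb; rewrite ipS.
apply: IH2 => a b /orP [] ha hb.
  by have := H _ _ ha hb; rewrite ipS.
by have := H _ _ ha hb; rewrite ipS.
Qed.

Lemma count_disj m : \sum_(a <- subs m) \sum_(b <- subs m) (ip m a b == 0) = 3 ^ m.
Proof.
elim: m => [|m IH]; first by rewrite /= !big_seq1 /ip big_ord0.
rewrite sum_subsS expnS -IH -big_split big_distrr /=; apply: eq_bigr => a _.
rewrite !sum_subsS -!big_split big_distrr /=; apply: eq_bigr => b _.
rewrite !ipS /= !add0n addn0.
by case: (ip m a b == 0).
Qed.

Lemma count_cover m r (A B : 'I_r -> seq bool -> bool) :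
  (forall j a b, A j a -> B j b -> ip m a b != 1) ->
  (forall a b, ip m a b = 0 -> exists j, A j a && B j b) -> 3 ^ m <= r * 2 ^ m.
Proof.
move=> HKW Hcov.
rewrite -count_disj.
apply: (@leq_trans (\sum_(a <- subs m) \sum_(b <- subs m) \sum_(j < r) (A j a && B j b && (ip m a b == 0)))).
  apply: leq_sum => a _; apply: leq_sum => b _.
  case: eqP => h //; case: (Hcov a b h) => j hj.
  by rewrite (bigD1 j) //= hj /= ?h ?eqxx leq_addr.
have -> : \sum_(a <- subs m) \sum_(b <- subs m) \sum_(j < r) (A j a && B j b && (ip m a b == 0))
   = \sum_(j < r) DD m (A j) (B j).
  rewrite /DD; under eq_bigr => a _ do rewrite exchange_big. by rewrite exchange_big.
rewrite -[X in _ <= X * _](card_ord r) -sum_nat_const; apply: leq_sum => j _; apply: KW => a b; exact: HKW.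
Qed.
Lemma final_nat m r : 3 ^ m <= r * 2 ^ m -> 0 < m -> 2 ^ m.+2 <= r ^ 4.
Proof.
move: m => [//|[|m]] H _.
  have h2 : 2 <= r by move: H; rewrite expn1; lia.
  have : 2 ^ 4 <= r ^ 4 by rewrite leq_exp2r.
  by apply: leq_trans.
have h32 : 4 * 32 ^ m.+2 <= 81 ^ m.+2.
  elim: m {H} => [//|m IH].
  rewrite (expnS 32) (expnS 81) mulnCA.
  apply: (@leq_trans (81 * (4 * 32 ^ m.+2))); last by rewrite leq_mul2l IH orbT.
  by rewrite leq_mul2r; apply/orP; right.
have H4 : (3 ^ m.+2) ^ 4 <= (r * 2 ^ m.+2) ^ 4 by rewrite leq_exp2r.
rewrite expnMn -!expnM in H4.
have e81 : 3 ^ (m.+2 * 4) = 81 ^ m.+2 by rewrite mulnC expnM.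
have e16 : 2 ^ (m.+2 * 4) = 16 ^ m.+2 by rewrite mulnC expnM.
rewrite e81 e16 in H4.
have : 2 ^ m.+4 * 16 ^ m.+2 <= r ^ 4 * 16 ^ m.+2.
  apply: leq_trans H4; apply: leq_trans h32.
  have -> : 2 ^ m.+4 * 16 ^ m.+2 = 4 * 32 ^ m.+2.
    rewrite !expnS -[32]/(2 * 16) expnMn.
    set X := 2 ^ m; set Y := 16 ^ m; nia.
  by [].
by rewrite leq_pmul2r ?expn_gt0.
Qed.

Local Open Scope ring_scope.
Section Quad1.
Variable R : realType.

Lemma sum_pairs_half n (G : 'I_n -> 'I_n -> R) :
  (forall i j, G i j = G j i) -> (forall i, G i i = 0) ->
  2 * \sum_(p : 'I_n * 'I_n | (p.1 < p.2)%N) G p.1 p.2 = \sum_(i : 'I_n) \sum_(j : 'I_n) G i j.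
Proof.
move=> Gs G0.
have E : \sum_(i : 'I_n) \sum_(j : 'I_n) G i j = \sum_(i : 'I_n) \sum_(j : 'I_n) (if (i < j)%N then G i j else 0)
   + \sum_(i : 'I_n) \sum_(j : 'I_n) (if (j < i)%N then G i j else 0).
  rewrite -big_split /=; apply: eq_bigr => i _; rewrite -big_split /=.
  apply: eq_bigr => j _; case: (ltngtP i j) => [h|h|/val_inj ->].
  - by rewrite addr0.
  - by rewrite add0r.
  - by rewrite G0 addr0.
rewrite E [X in _ + X]exchange_big /=.
have -> : \sum_(j : 'I_n) \sum_(i : 'I_n) (if (j < i)%N then G i j else 0) =
          \sum_(i : 'I_n) \sum_(j : 'I_n) (if (i < j)%N then G i j else 0).
  by apply: eq_bigr => i _; apply: eq_bigr => j _; rewrite Gs.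
suff -> : \sum_(p : 'I_n * 'I_n | (p.1 < p.2)%N) G p.1 p.2 =
   \sum_(i : 'I_n) \sum_(j : 'I_n) (if (i < j)%N then G i j else 0).
  by rewrite mulr_natl mulr2n.
rewrite (pair_big xpredT xpredT (fun i j : 'I_n => if (i < j)%N then G i j else 0)) /=.
by rewrite big_mkcond.
Qed.
End Quad1.
Section Quad.
Variable R : realType.
Lemma dsum n (a b : 'I_n -> R) :
  \sum_(i : 'I_n) \sum_(j : 'I_n) a i * b j = (\sum_i a i) * (\sum_j b j).
Proof. rewrite mulr_suml; apply: eq_bigr => i _; by rewrite mulr_sumr. Qed.

Lemma quad_full n (l s : 'I_n -> R) :
  \sum_(i : 'I_n) \sum_(j : 'I_n) l i * l j * (s i - s j) ^+ 2 =
  2 * ((\sum_i l i) * (\sum_i l i * s i ^+ 2) - (\sum_i l i * s i) ^+ 2).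
Proof.
have -> : forall A B C : R, 2 * (A * B - C ^+ 2) = A * B + B * A - 2 * (C * C).
  by move=> A B C; ring.
rewrite -!dsum mulr_sumr -!big_split -sumrB /=; apply: eq_bigr => i _.
rewrite mulr_sumr -!big_split -sumrB /=; apply: eq_bigr => j _; ring.
Qed.
End Quad.
Section Geo.
Variable R : realType.
Variables (n mm r : nat) (E : 'I_mm -> edge n -> R) (F : 'I_mm -> 'I_r -> R) (g : 'I_mm -> R).

Definition eqs (x : vecE R n) (y : 'I_r -> R) :=
  forall i, \sum_(e : edge n) E i e * x e + \sum_(j < r) F i j * y j = g i.
Definition Lset x y := (forall j, 0 <= y j) /\ eqs x y.
Definition phi (w : edge n -> R) (x : vecE R n) := \sum_(e : edge n) w e * x e.

Lemma phi_comb (I : finType) (mu : I -> R) (xs : I -> vecE R n) w :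
  phi w (fun e => \sum_k mu k * xs k e) = \sum_k mu k * phi w (xs k).
Proof.
rewrite /phi; under eq_bigr => e _ do rewrite mulr_sumr.
rewrite exchange_big /=; apply: eq_bigr => k _; rewrite mulr_sumr.
by apply: eq_bigr => e _; rewrite mulrCA.
Qed.

Lemma sum_comb (I : finType) (mu : I -> R) (ys : I -> 'I_r -> R) (G : 'I_r -> R) :
  \sum_(j < r) G j * (\sum_k mu k * ys k j) = \sum_k mu k * \sum_(j < r) G j * ys k j.
Proof.
under eq_bigr => e _ do rewrite mulr_sumr.
rewrite exchange_big /=; apply: eq_bigr => k _; rewrite mulr_sumr.
by apply: eq_bigr => e _; rewrite mulrCA.
Qed.

Lemma eqs_comb (I : finType) (mu : I -> R) xs ys :
  \sum_k mu k = 1 -> (forall k, eqs (xs k) (ys k)) ->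
  eqs (fun e => \sum_k mu k * xs k e) (fun j => \sum_k mu k * ys k j).
Proof.
move=> H1 H i.
have := phi_comb mu xs (E i); rewrite /phi => ->.
rewrite sum_comb -big_split /=.
under eq_bigr => k _ do rewrite -mulrDr H.
by rewrite -mulr_suml H1 mul1r.
Qed.

Lemma face (w : edge n -> R) x0 y0 xb yb :
  Lset x0 y0 -> phi w x0 = 0 -> Lset xb yb -> phi w xb < 0 ->
  (forall x y, Lset x y -> phi w x <= 0) ->
  exists j, 0 < yb j /\ (forall x y, Lset x y -> phi w x = 0 -> y j = 0).
Proof.
move=> L0 p0 Lb pb Hle.
case: (pselect (exists j, 0 < yb j /\ (forall x y, Lset x y -> phi w x = 0 -> y j = 0))) => // Hn.
have Hp : forall j, exists p : vecE R n * ('I_r -> R),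
    [/\ Lset p.1 p.2, phi w p.1 = 0 & (0 < yb j -> 0 < p.2 j)].
  move=> j; case: (pselect (0 < yb j)) => hj; last by exists (x0, y0); split.
  case: (pselect (exists p : vecE R n * ('I_r -> R), Lset p.1 p.2 /\ phi w p.1 = 0 /\ p.2 j != 0)).
    move=> [[x y] /= [Lxy [pxy yj]]]; exists (x, y); split => // _.
    by rewrite lt0r yj; case: Lxy => ->.
  move=> Hq; exfalso; apply: Hn; exists j; split => // x y Lxy pxy.
  case: (pselect (y j = 0)) => // yj; exfalso; apply: Hq; exists (x, y); split => //; split => //.
  by apply/eqP.
pose p j := proj1_sig (cid (Hp j)).
have pP j : [/\ Lset (p j).1 (p j).2, phi w (p j).1 = 0 & (0 < yb j -> 0 < (p j).2 j)].
  exact: (proj2_sig (cid (Hp j))).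
pose pt (k : option 'I_r) := if k is Some j then p j else (x0, y0).
have ptL k : Lset (pt k).1 (pt k).2 /\ phi w (pt k).1 = 0.
  by case: k => [j|] /=; [case: (pP j) | split].
pose mu (k : option 'I_r) : R := (r.+1%:R)^-1.
have mu1 : \sum_k mu k = 1.
  rewrite sumr_const card_option card_ord.
  have -> : (r.+1%:R : R)^-1 *+ r.+1 = r.+1%:R * (r.+1%:R : R)^-1 by rewrite mulr_natl.
  by rewrite mulfV // pnatr_eq0.
have mu0 k : 0 <= mu k by rewrite /mu invr_ge0 ler0n.
pose xs e := \sum_k mu k * (pt k).1 e.
pose ys j := \sum_k mu k * (pt k).2 j.
have Ls : Lset xs ys.
  split; last by apply: eqs_comb => // k; case: (ptL k) => -[].
  move=> j; apply: sumr_ge0 => k _; apply: mulr_ge0 => //.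
  by case: (ptL k) => -[] + _ _; apply.
have ps : phi w xs = 0.
  rewrite /xs phi_comb big1 // => k _; by case: (ptL k) => _ ->; rewrite mulr0.
have ysp j : 0 < yb j -> 0 < ys j.
  move=> hj; rewrite /ys (bigD1 (Some j)) //=.
  apply: (@lt_le_trans _ _ (mu (Some j) * (p j).2 j)).
    apply: mulr_gt0; first by rewrite /mu invr_gt0 ltr0n.
    by case: (pP j) => _ _; apply.
  rewrite lerDl; apply: sumr_ge0 => k _; apply: mulr_ge0 => //.
  by case: (ptL k) => -[] + _ _; apply.
pose M := \sum_j (if 0 < yb j then yb j / ys j else 0).
have M0 : 0 <= M.
  apply: sumr_ge0 => j _; case: ifP => // hj.
  by apply: divr_ge0; [apply: ltW | apply: ltW; apply: ysp].
pose eps := (1 + M)^-1.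
have eps0 : 0 < eps by rewrite /eps invr_gt0; lra.
pose nu (b : bool) : R := if b then 1 + eps else - eps.
pose xf (b : bool) := if b then xs else xb.
pose yf (b : bool) := if b then ys else yb.
pose xq e := \sum_(b : bool) nu b * xf b e.
pose yq j := \sum_(b : bool) nu b * yf b j.
have nu1 : \sum_(b : bool) nu b = 1 by rewrite big_bool /=; ring.
have Lq : Lset xq yq.
  split; last first.
    apply: (@eqs_comb _ nu xf yf) => //.
    by case; [case: Ls | case: Lb].
  move=> j; rewrite /yq big_bool /=.
  case: Ls => Ly _; case: Lb => Lyb _.
  have := Ly j; have := Lyb j.
  case: (pselect (0 < yb j)) => hj.
    have ysj := ysp j hj.
    have hM : yb j / ys j <= M.
      rewrite /M (bigD1 j) //= hj lerDl; apply: sumr_ge0 => k _; case: ifP => // hk.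
      by apply: divr_ge0; [apply: ltW | apply: ltW; apply: ysp].
    have h1 : yb j <= ys j * (1 + M).
      have : yb j = ys j * (yb j / ys j) by rewrite mulrCA mulfV ?mulr1 // gt_eqF.
      move=> ->; apply: ler_wpM2l; [exact: ltW | lra].
    have h2 : eps * yb j <= ys j.
      rewrite /eps mulrC ler_pdivrMr; last lra.
      exact: h1.
    move=> _ _; nra.
  have -> : yb j = 0 by apply: le_anti; rewrite (Lyb j) andbT leNgt; apply/negP.
  move=> _ ysj0; nra.
have : phi w xq <= 0 by apply: Hle Lq.
rewrite /xq (@phi_comb _ nu xf) big_bool /= ps.
move=> h; nra.
Qed.
End Geo.
Section Rows.
Variable R : realType.

Definition lamv m (a : seq bool) (v : 'I_m.+2) : R :=
  if val v == 0%N then (\sum_(i < m) (nth false a i)%:R) - 1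
  else if val v == 1%N then 1 else - (nth false a (val v).-2)%:R.

Definition colX m (b : seq bool) : {set 'I_m.+2} :=
  [set v : 'I_m.+2 | (val v == 1%N) || ((1 < val v)%N && nth false b (val v).-2)].

Lemma sum_lamv m a : \sum_v @lamv m a v = 0.
Proof.
rewrite !big_ord_recl /lamv /=.
under eq_bigr => i _ do rewrite /bump /=.
rewrite sumrN; ring.
Qed.

Lemma sum_lamv_col m a b :
  \sum_v @lamv m a v * (v \in colX m b)%:R = 1 - (ip m a b)%:R.
Proof.
rewrite !big_ord_recl /lamv /colX /= !in_set /=.
rewrite [X in _ + (_ + X)](eq_bigr (fun i : 'I_m => - (nth false a i && nth false b i)%:R)); last first.
  move=> i _; rewrite in_set /= add0n.
  by case: (nth false a i); case: (nth false b i) => /=; ring.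
rewrite /ip natr_sum sumrN; ring.
Qed.
End Rows.
Section Cut.
Variable R : realType.

Lemma sum_edge n (G : 'I_n * 'I_n -> R) :
  \sum_(e : edge n) G (val e) = \sum_(p : 'I_n * 'I_n | (p.1 < p.2)%N) G p.
Proof. by rewrite (big_sub [pred p : 'I_n * 'I_n | (p.1 < p.2)%N]). Qed.

Lemma quad_edge n (l s : 'I_n -> R) :
  \sum_(e : edge n) l (val e).1 * l (val e).2 * (s (val e).1 - s (val e).2) ^+ 2 =
  (\sum_i l i) * (\sum_i l i * s i ^+ 2) - (\sum_i l i * s i) ^+ 2.
Proof.
rewrite (sum_edge (fun p => l p.1 * l p.2 * (s p.1 - s p.2) ^+ 2)).
apply: (@mulfI _ 2); first by rewrite pnatr_eq0.
rewrite (@sum_pairs_half R n (fun i j => l i * l j * (s i - s j) ^+ 2)).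
- by rewrite quad_full.
- by move=> i j; ring.
- by move=> i; rewrite subrr expr0n mulr0.
Qed.

Lemma cut_sq n (X : {set 'I_n}) e :
  cut_vec R X e = (((val e).1 \in X)%:R - ((val e).2 \in X)%:R) ^+ 2.
Proof. by rewrite /cut_vec; case: ((val e).1 \in X); case: ((val e).2 \in X) => /=; ring. Qed.

Lemma phi_cut n (l : 'I_n -> R) X : \sum_i l i = 0 ->
  phi (fun e => l (val e).1 * l (val e).2) (cut_vec R X) = - (\sum_i l i * (i \in X)%:R) ^+ 2.
Proof.
move=> l0; rewrite /phi.
under eq_bigr => e _ do rewrite cut_sq.
by rewrite (quad_edge l (fun v => (v \in X)%:R)) l0 mul0r sub0r.
Qed.

Lemma cut_CUT n (X : {set 'I_n}) : @CUT R n (cut_vec R X).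
Proof.
exists (fun Y => (Y == X)%:R); split.
- by move=> Y; rewrite ler0n.
- by rewrite (bigD1 X) //= eqxx big1 ?addr0 // => Y /negbTE ->.
- move=> e; rewrite (bigD1 X) //= eqxx mul1r big1 ?addr0 // => Y /negbTE ->.
  by rewrite mul0r.
Qed.

Lemma scale_le n (w : edge n -> R) rho x : 0 <= rho ->
  (forall X, phi w (cut_vec R X) <= 0) -> scale_set rho (@CUT R n) x -> phi w x <= 0.
Proof.
move=> r0 H [z [lam [l0 l1 hz]] hx].
have -> : phi w x = rho * phi w (fun e => \sum_X lam X * cut_vec R X e).
  rewrite /phi mulr_sumr; apply: eq_bigr => e _; rewrite hx hz; ring.
rewrite phi_comb.
have : \sum_X lam X * phi w (cut_vec R X) <= 0.
  rewrite -oppr_ge0 -sumrN; apply: sumr_ge0 => X _.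
  rewrite -mulrN; apply: mulr_ge0 => //; rewrite oppr_ge0; exact: H.
move=> h; nra.
Qed.

Lemma scale_bounds n rho x e : 0 <= rho -> scale_set rho (@CUT R n) x -> 0 <= x e <= rho.
Proof.
move=> r0 [z [lam [l0 l1 hz]] hx].
have c01 X : 0 <= cut_vec R X e <= 1 by rewrite /cut_vec; case: ifP => _; rewrite ?lexx ?ler01.
have z0 : 0 <= z e.
  rewrite hz; apply: sumr_ge0 => X _; apply: mulr_ge0 => //; by case/andP: (c01 X).
have z1 : z e <= 1.
  rewrite hz -l1; apply: ler_sum => X _; rewrite -[X in _ <= X]mulr1; apply: ler_wpM2l => //.
  by case/andP: (c01 X).
rewrite hx; apply/andP; split; nra.
Qed.
End Cut.

Section Main.
Variable R : realType.

Lemma main_count m rho r mm (E : 'I_mm -> edge m.+2 -> R) (F : 'I_mm -> 'I_r -> R) g :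
  0 <= rho -> (forall x, @CUT R m.+2 x -> EF_proj E F g x) ->
  (forall x, EF_proj E F g x -> scale_set rho (@CUT R m.+2) x) -> (3 ^ m <= r * 2 ^ m)%N.
Proof.
move=> r0 hP hQ.
have lift X : exists y, Lset E F g (cut_vec R X) y by apply: hP; apply: cut_CUT.
pose yof b := proj1_sig (cid (lift (colX m b))).
have yofP b : Lset E F g (cut_vec R (colX m b)) (yof b) := proj2_sig (cid (lift (colX m b))).
have [y0 Ly0] := lift set0.
pose wrow a := fun e : edge m.+2 => @lamv R m a (val e).1 * @lamv R m a (val e).2.
have valid a x y : Lset E F g x y -> phi (wrow a) x <= 0.
  move=> hxy; apply: (scale_le r0); last by apply: hQ; exists y.
  move=> X; rewrite phi_cut ?sum_lamv // oppr_le0; exact: sqr_ge0.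
have phi0 a : phi (wrow a) (cut_vec R set0) = 0.
  rewrite phi_cut ?sum_lamv // big1 ?expr0n ?oppr0 // => i _.
  by rewrite in_set0 mulr0.
have phicol a b : phi (wrow a) (cut_vec R (colX m b)) = - (1 - (ip m a b)%:R) ^+ 2.
  by rewrite phi_cut ?sum_lamv // sum_lamv_col.
pose A (j : 'I_r) a := `[< forall x y, Lset E F g x y -> phi (wrow a) x = 0 -> y j = 0 >].
pose B (j : 'I_r) b := (0 < yof b j).
apply: (@count_cover m r A B).
  move=> j a b /asboolP hA hB; apply/eqP => h1.
  have := hA _ _ (yofP b); rewrite phicol h1 subrr expr0n oppr0 => /(_ erefl) h.
  by move: hB; rewrite /B h ltxx.
move=> a b h0.
have hneg : phi (wrow a) (cut_vec R (colX m b)) < 0.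
  by rewrite phicol h0 subr0 expr1n ltrN10.
have [j [hj1 hj2]] := face Ly0 (phi0 a) (yofP b) hneg (@valid a).
by exists j; apply/andP; split; [apply/asboolP | ].
Qed.
End Main.

Section R2.
Variable R : realType.

Lemma r_ge2 m rho r mm (E : 'I_mm -> edge m.+2 -> R) (F : 'I_mm -> 'I_r -> R) g :
  0 <= rho -> (forall x, @CUT R m.+2 x -> EF_proj E F g x) ->
  (forall x, EF_proj E F g x -> scale_set rho (@CUT R m.+2) x) -> (2 <= r)%N.
Proof.
move=> r0 hP hQ.
rewrite leqNgt; apply/negP => hr.
have lft X : exists y, Lset E F g (cut_vec R X) y by apply: hP; apply: cut_CUT.
have [y0 [Ly0 E0]] := lft set0.
have [y1 [Ly1 E1]] := lft [set ord0].
pose e01 : edge m.+2 := exist _ (ord0, lift ord0 ord0) isT.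
have z0 : cut_vec R set0 e01 = 0 by rewrite /cut_vec !in_set0.
have z1 : cut_vec R [set ord0] e01 = 1 by rewrite /cut_vec /= !in_set1.
have jj (j k : 'I_r) : j = k.
  apply: ord_inj; have := ltn_ord j; have := ltn_ord k; move: hr; lia.
pose xf (b : bool) : vecE R m.+2 := if b then cut_vec R [set ord0] else cut_vec R set0.
pose yf (b : bool) := if b then y1 else y0.
have Ef b : eqs E F g (xf b) (yf b) by case: b.
have comb (t : R) : (forall j, 0 <= t * y1 j + (1 - t) * y0 j) ->
    0 <= t <= rho /\ 0 <= t.
  move=> hy.
  pose nu (b : bool) : R := if b then t else 1 - t.
  have nu1 : \sum_b nu b = 1 by rewrite big_bool /=; ring.
  have := hQ (fun e => \sum_b nu b * xf b e).
  have H : EF_proj E F g (fun e => \sum_b nu b * xf b e).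
    exists (fun j => \sum_b nu b * yf b j); split; last exact: eqs_comb.
    by move=> j; rewrite big_bool /=; apply: hy.
  move=> /(_ H) /(scale_bounds e01 r0).
  rewrite big_bool /= z0 z1 mulr1 mulr0 addr0 => h; split => //.
  by case/andP: h.
case: (pselect (forall j, y0 j <= y1 j)) => hy.
  have := comb (rho + 1).
  have hh : forall j, 0 <= (rho + 1) * y1 j + (1 - (rho + 1)) * y0 j.
    by move=> j; have := hy j; have := Ly0 j; nra.
  move=> /(_ hh) [/andP [_ h] _]; lra.
have [j hj] : exists j, ~ (y0 j <= y1 j) by apply/existsNP.
have := comb (-1).
have hh : forall k, 0 <= (-1) * y1 k + (1 - (-1)) * y0 k.
  move=> k; rewrite (jj k j); have := Ly0 j; have := Ly1 j.
  move: hj => /negP; rewrite -ltNge => hj; nra.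
by move=> /(_ hh) [_ h]; lra.
Qed.
End R2.

Theorem proposition3 (R : realType) :
  exists c : R, 0 < c /\
    forall (rho : R) (n : nat), 1 <= rho -> (2 <= n)%N ->
      xc_ge (@CUT R n) (scale_set rho (@CUT R n)) (powR 2 (c * n%:R)).
Proof.
exists (4%:R^-1); split; first by rewrite invr_gt0 ltr0n.
move=> rho [|[|m]] // rho1 _ r [mm [E [F [g [hP hQ]]]]].
have r0 : 0 <= rho by lra.
have key : (2 ^ m.+2 <= r ^ 4)%N.
  case: m E F g hP hQ => [|m] E F g hP hQ.
    have h2 := r_ge2 r0 hP hQ.
    have : (2 ^ 4 <= r ^ 4)%N by rewrite leq_exp2r.
    by apply: leq_trans.
  apply: final_nat => //; exact: main_count r0 hP hQ.
set v := powR 2 _.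
have v0 : 0 <= v by apply: powR_ge0.
rewrite -(@ler_pXn2r _ 4) // ?nnegrE ?ler0n //.
have -> : v ^+ 4 = 2 ^+ m.+2.
  rewrite -powR_mulrn // -powRrM -powR_mulrn ?ler0n //; congr (powR _ _).
  by rewrite mulrAC mulVf ?mul1r // pnatr_eq0.
by rewrite -natrX -natrX ler_nat.
Qed.
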